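(* Let $G$ be a finite group and let $H,K$ be distinct subgroups of $G$. Then there is a simple $\mathbb CG$-module $W$ such that the space $W^H$ of $H$-invariants and the space $W^K$ of $K$-invariants are distinct. *)

(* Defs.v *)
From mathcomp Require Import all_boot all_order all_algebra all_fingroup all_solvable all_field all_character.

(* Main.v *)
Require Import Defs.
From mathcomp Require Import all_boot all_order all_algebra all_fingroup all_solvable all_field all_character.
Import GRing.Theory.
Local Open Scope group_scope.

Section Helpers.
Import Num.Theory.
Local Open Scope ring_scope.
Lemma tr_pid (F : fieldType) n r : (r <= n)%N -> \tr (pid_mx r : 'M[F]_n) = r%:R.
Proof.
move=> lern; rewrite /mxtrace.
under eq_bigr do rewrite mxE eqxx /=.
rewrite -natr_sum; congr (_ %:R).
rewrite -(big_mkord xpredT (fun i => nat_of_bool (i < r)%N)).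
rewrite (@big_cat_nat _ _ _ r 0 n _ _ (leq0n r) lern) /=.
have -> : (\sum_(r <= i < n) (i < r))%N = 0%N.
  rewrite big_nat_cond big1 //.
  by move=> i /andP[/andP[]]; rewrite leqNgt => /negPf ->.
rewrite addn0 big_nat_cond (eq_bigr (fun _ => 1%N)); last by move=> i /andP[/andP[_ ->]].
by rewrite -big_nat_cond sum1_size size_iota subn0.
Qed.
Lemma tr_idem (F : fieldType) n (P : 'M[F]_n) : P *m P = P -> \tr P = (\rank P)%:R.
Proof.
move=> PP.
have E := mulmx_ebase P.
set L := col_ebase P in E; set U := row_ebase P in E; set D := pid_mx (\rank P) in E.
have uL : L \in unitmx by apply: col_ebase_unit.
have uU : U \in unitmx by apply: row_ebase_unit.
have DD : D *m D = D by rewrite pid_mx_id // rank_leq_row.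
have DMD : D *m (U *m L) *m D = D.
  have : invmx L *m (P *m P) *m invmx U = invmx L *m P *m invmx U by rewrite PP.
  rewrite -{1 2 3}E !mulmxA mulVmx // mul1mx -!mulmxA !mulmxV // !mulmx1.
  by rewrite !mulmxA.
have -> : \tr P = \tr (D *m (U *m L)).
  by rewrite -{1}E mxtrace_mulC mulmxA mxtrace_mulC.
by rewrite -{1}DD -mulmxA mxtrace_mulC DMD /D tr_pid // rank_leq_row.
Qed.

Lemma rank_rfix (gT : finGroupType) (G H : {group gT}) n
  (rG : mx_representation algC G n) : H \subset G ->
  (\rank (rfix_mx rG H))%:R = #|H|%:R^-1 * \sum_(h in H) \tr (rG h).
Proof.
move=> sHG.
have nH : #|H|%:R != 0 :> algC by rewrite pnatr_eq0 -lt0n cardG_gt0.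
pose P := #|H|%:R^-1 *: \sum_(h in H) rG h.
have PA : forall x, x \in H -> P *m rG x = P.
  move=> x Hx; rewrite /P -scalemxAl mulmx_suml; congr (_ *: _).
  rewrite [RHS](reindex_inj (mulIg x)) /=.
  apply: eq_big => [h | h Hh]; first by rewrite groupMr.
  by rewrite repr_mxM // (subsetP sHG).
have PR : (P <= rfix_mx rG H)%MS by apply/rfix_mxP.
have RP : rfix_mx rG H *m P = rfix_mx rG H.
  rewrite /P -scalemxAr mulmx_sumr.
  rewrite (eq_bigr (fun _ => rfix_mx rG H)); last by move=> h Hh; rewrite rfix_mx_id.
  by rewrite sumr_const -scaler_nat scalerA mulVf // scale1r.
have PP : P *m P = P.
  rewrite {2}/P -scalemxAr mulmx_sumr (eq_bigr (fun _ => P)); last by move=> h /PA.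
  by rewrite sumr_const -scaler_nat scalerA mulVf // scale1r.
have -> : \rank (rfix_mx rG H) = \rank P.
  apply/eqP; rewrite eqn_leq !mxrankS //.
  by rewrite -{1}RP submxMl.
by rewrite -tr_idem // /P mxtraceZ raddf_sum.
Qed.

Lemma cfdot_rfix (gT : finGroupType) (G H : {group gT}) n
  (rG : mx_representation algC G n) : H \subset G ->
  '[1, 'Res[H] (cfRepr rG)] = (\rank (rfix_mx rG H))%:R.
Proof.
move=> sHG; rewrite cfdotC rank_rfix // cfdotE.
have -> : \sum_(x in H) ('Res[H] (cfRepr rG)) x * ((1 : 'CF(H)) x)^* = \sum_(h in H) \tr (rG h).
  apply: eq_bigr => x Hx.
  by rewrite cfResE // cfunE (subsetP sHG x Hx) mulr1n cfun1E Hx conjC1 mulr1.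
by rewrite -rank_rfix // conjC_nat.
Qed.

Lemma same_rfix (gT : finGroupType) (G M L : {group gT}) :
  M \subset L -> L \subset G ->
  (forall i : Iirr G, \rank (rfix_mx 'Chi_i M) = \rank (rfix_mx 'Chi_i L)) ->
  M :=: L.
Proof.
move=> sML sLG eqr; have sMG := subset_trans sML sLG.
have eqI : 'Ind[G] (1 : 'CF(M)) = 'Ind[G] (1 : 'CF(L)).
  rewrite [LHS]cfun_sum_cfdot [RHS]cfun_sum_cfdot; apply: eq_bigr => i _.
  by rewrite -!Frobenius_reciprocity -!irrRepr !cfdot_rfix // eqr.
have := congr1 (fun f : 'CF(G) => f 1%g) eqI; rewrite /= !cfInd1 // !cfun11 !mulr1.
move/eqP; rewrite eqr_nat => /eqP eqi.
apply/eqP; rewrite eqEcard sML /=.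
have := Lagrange sMG; have := Lagrange sLG; rewrite eqi => <- /eqP.
by rewrite eqn_pmul2r ?indexg_gt0 // => /eqP ->.
Qed.

End Helpers.

(* A simple CG-module W is an irreducible matrix representation of G over algC;
   W^H is the row space rfix_mx rG H of H-fixed vectors. *)
Theorem lemma3p2 (gT : finGroupType) (G H K : {group gT})
  (sHG : H \subset G) (sKG : K \subset G) (neHK : H != K) :
  exists (n : nat) (rG : mx_representation algC G n),
    mx_irreducible rG /\ ~~ (rfix_mx rG H == rfix_mx rG K)%MS.
Proof.
have [i neq] : exists i : Iirr G, ~~ (rfix_mx 'Chi_i H == rfix_mx 'Chi_i K)%MS.
  apply/existsP; apply: contraNT neHK; rewrite negb_exists => /forallP /= allE.
  set L := (H <*> K)%G.
  have sLG : L \subset G by rewrite join_subG sHG.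
  have fixL : forall i : Iirr G, (rfix_mx 'Chi_i H <= rfix_mx 'Chi_i L)%MS /\
                      (rfix_mx 'Chi_i K <= rfix_mx 'Chi_i L)%MS.
    move=> j; have /negbNE/andP[hk kh] := allE j.
    rewrite -!rfix_mx_rstabC // /L !join_subG /=.
    by rewrite !rfix_mx_rstabC // hk kh !submx_refl.
  have eH : H :=: L.
    apply: same_rfix (joing_subl H K) sLG _ => j.
    apply/eqP; rewrite eqn_leq !mxrankS ?(fixL j).1 //.
    exact: rfix_mxS (joing_subl H K).
  have eK : K :=: L.
    apply: same_rfix (joing_subr H K) sLG _ => j.
    apply/eqP; rewrite eqn_leq !mxrankS ?(fixL j).2 //.
    exact: rfix_mxS (joing_subr H K).
  by apply/eqP; apply: val_inj; rewrite /= eH eK.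
by exists _, 'Chi_i; split => //; apply: socle_irr.
Qed.
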